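(* A connected block-cactus graph $G$ is $1$-perfectly orientable if and only if at most one block of $G$ is a cycle of length at least four.
   Context: All graphs are finite and simple. A graph is biconnected if it is connected with no cut vertex; a block is a maximal biconnected subgraph. A block-cactus graph is a graph each of whose blocks is either a cycle or a complete graph. An orientation of $G$ is $1$-perfect if for every vertex the out-neighborhood is a clique in $G$; $G$ is $1$-perfectly orientable if it has a $1$-perfect orientation. *)

(* Defs.v *)
From mathcomp Require Import all_boot.
Set Implicit Arguments. Unset Strict Implicit. Unset Printing Implicit Defensive.

(* A finite simple graph: vertex type T : finType, adjacency e : rel T,
   assumed symmetric and irreflexive in the theorem. *)

Section Graphs.
Variables (T : finType) (e : rel T).

Definition conn_in (S : {set T}) (x y : T) : bool :=
  connect [rel u v | [&& u \in S, v \in S & e u v]] x y.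

Definition connected_in (S : {set T}) : Prop :=
  S != set0 /\ forall x y, x \in S -> y \in S -> conn_in S x y.

(* v is a cut vertex of G[S]: removing it increases the number of
   components, i.e. separates two vertices that were joined in G[S] *)
Definition cut_vertex_in (S : {set T}) (v : T) : Prop :=
  v \in S /\ exists x y, [/\ x \in S :\ v, y \in S :\ v,
                            conn_in S x y & ~~ conn_in (S :\ v) x y].

Definition biconnected_in (S : {set T}) : Prop :=
  connected_in S /\ forall v, ~ cut_vertex_in S v.

Definition is_block (S : {set T}) : Prop :=
  biconnected_in S /\
  forall S' : {set T}, S \subset S' -> biconnected_in S' -> S' = S.

Definition is_cycle_in (S : {set T}) : Prop :=
  [/\ 3 <= #|S|, connected_in S &
      forall v, v \in S -> #|[set u in S | e v u]| = 2].

Definition is_complete_in (S : {set T}) : Prop :=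
  forall x y, x \in S -> y \in S -> x != y -> e x y.

Definition graph_connected : Prop := connected_in [set: T].

Definition block_cactus : Prop :=
  forall S, is_block S -> is_cycle_in S \/ is_complete_in S.

Definition is_orientation (o : rel T) : Prop :=
  (forall x y, o x y -> e x y) /\
  (forall x y, e x y -> (o x y && ~~ o y x) || (o y x && ~~ o x y)).

Definition one_perfect (o : rel T) : Prop :=
  is_orientation o /\
  forall v u w, o v u -> o v w -> u != w -> e u w.

Definition one_perfectly_orientable : Prop :=
  exists o : rel T, one_perfect o.

Definition long_cycle_block (S : {set T}) : Prop :=
  [/\ is_block S, is_cycle_in S & 4 <= #|S|].

Definition at_most_one_long_cycle_block : Prop :=
  forall S1 S2, long_cycle_block S1 -> long_cycle_block S2 -> S1 = S2.

End Graphs.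

(* Main.v *)
Require Import Defs.
From mathcomp Require Import all_boot zify.
From Stdlib Require Import Classical.
Set Implicit Arguments. Unset Strict Implicit. Unset Printing Implicit Defensive.

Section Aux.
Variables (T : finType) (e : rel T).
Hypothesis esym : symmetric e.
Hypothesis eirr : irreflexive e.

Definition rin (S : {set T}) := [rel u v | [&& u \in S, v \in S & e u v]].

Lemma rin_sym S : symmetric (rin S).
Proof. by move=> u v /=; rewrite esym andbCA. Qed.

Lemma connE (S : {set T}) x y : conn_in e S x y = connect (rin S) x y.
Proof. by []. Qed.

Lemma conn_sym (S : {set T}) x y : conn_in e S x y = conn_in e S y x.
Proof. by rewrite !connE (sym_connect_sym (rin_sym S)). Qed.

Lemma conn_trans (S : {set T}) x y z : conn_in e S x y -> conn_in e S y z -> conn_in e S x z.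
Proof. rewrite !connE; exact: connect_trans. Qed.

Lemma conn_refl (S : {set T}) x : conn_in e S x x.
Proof. by rewrite connE connect0. Qed.

Lemma conn_edge (S : {set T}) x y : x \in S -> y \in S -> e x y -> conn_in e S x y.
Proof. by move=> xS yS exy; rewrite connE connect1 //= xS yS. Qed.

Lemma conn_mono (S S' : {set T}) x y : S \subset S' -> conn_in e S x y -> conn_in e S' x y.
Proof.
move=> sub; rewrite !connE; apply: connect_sub => u v /= /and3P[uS vS euv].
by apply: connect1; rewrite /= (subsetP sub _ uS) (subsetP sub _ vS).
Qed.

Lemma path_rin_in (S : {set T}) x p : path (rin S) x p -> x \in S -> {subset x :: p <= S}.
Proof.
elim: p x => [|y p IH] x /=; first by move=> _ xS z; rewrite inE => /eqP ->.
case/andP=> /and3P[_ yS _] pth xS z; rewrite inE => /orP[/eqP -> //|].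
exact: IH.
Qed.

Lemma conn_mem (S : {set T}) x y : x \in S -> conn_in e S x y -> y \in S.
Proof.
move=> xS; rewrite connE => /connectP[p pth ->].
by apply: (path_rin_in pth xS); rewrite mem_last.
Qed.

Lemma conn_closed (S Q : {set T}) x y : (forall a b, a \in Q -> b \in S -> e a b -> b \in Q) ->
  x \in Q -> conn_in e S x y -> y \in Q.
Proof.
move=> cl xQ; rewrite connE => /connectP[p pth ->].
elim: p x xQ pth => [|z p IH] x xQ //= /andP[/and3P[_ zS exz] pth].
by apply: IH pth; apply: cl exz.
Qed.

Lemma path_rin_e (S : {set T}) x p : path (rin S) x p -> path e x p.
Proof. by apply: sub_path => u v /and3P[]. Qed.

Definition bic S := [/\ S != set0, {in S &, forall x y, conn_in e S x y} &
  forall z, {in S :\ z &, forall x y, conn_in e (S :\ z) x y}].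

Lemma bicP (S : {set T}) : biconnected_in e S <-> bic S.
Proof.
split.
  case=> [[S0 cS] nocut]; split => //.
  move=> z x y xS yS.
  case: (boolP (z \in S)) => zS.
    apply/negPn/negP => ncon; apply: (nocut z); split => //.
    exists x, y; split => //; apply: cS; [move: xS|move: yS]; by rewrite inE => /andP[].
  have -> : S :\ z = S.
    apply/setP => u; rewrite !inE; case: eqP => // ->; by rewrite (negbTE zS).
  by apply: cS; [move: xS|move: yS]; rewrite inE => /andP[].
case=> S0 cS cz; split; first by split => // x y; apply: cS.
move=> v [vS [x [y [xS yS _ nc]]]]; by rewrite (cz v x y xS yS) in nc.
Qed.

Lemma hub (U : {set T}) c : (forall x, x \in U -> conn_in e U x c) -> {in U &, forall x y, conn_in e U x y}.
Proof.
move=> H x y xU yU; apply: (conn_trans (H x xU)); rewrite conn_sym; exact: H.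
Qed.


Lemma bic_block (S : {set T}) : bic S -> exists B, is_block e B /\ S \subset B.
Proof.
move=> bS.
suff H : forall n (S : {set T}), #|T| - #|S| < n -> bic S -> exists B, is_block e B /\ S \subset B.
  by apply: (H (#|T| - #|S|).+1).
elim=> [|n IH] {bS}S; first by [].
move=> lt bS.
case: (classic (is_block e S)) => [bl|nbl]; first by exists S.
have [S' [sub bS' neq]] : exists S' : {set T}, [/\ S \subset S', bic S' & S' <> S].
  apply: NNPP => nex; apply: nbl; split; first by apply/bicP.
  move=> S' sub bS'; apply: NNPP => neq; apply: nex; exists S'; split => //.
  by apply/bicP.
have [B [bB sB]] : exists B, is_block e B /\ S' \subset B.
  apply: IH bS'.
  have pr : S \proper S' by rewrite properEneq sub andbT; apply/eqP => E; apply: neq.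
  have := proper_card pr; have := max_card (pred_of_set S'); lia.
by exists B; split => //; apply: subset_trans sB.
Qed.

Lemma bicU (S1 S2 : {set T}) a b : bic S1 -> bic S2 -> a \in S1 -> a \in S2 ->
  b \in S1 -> b \in S2 -> a != b -> bic (S1 :|: S2).
Proof.
move=> [_ c1 z1] [_ c2 z2] a1 a2 b1 b2 ab; split.
- by apply/set0Pn; exists a; rewrite inE a1.
- apply: (@hub _ a) => x; rewrite inE => /orP[] xS.
    by apply: (conn_mono (subsetUl S1 S2)); apply: c1.
  by apply: (conn_mono (subsetUr S1 S2)); apply: c2.
- move=> z; set c := if a == z then b else a.
  have cz : c != z by rewrite /c; case: (eqVneq a z) => [<-|az] //; rewrite eq_sym.
  have c1' : c \in S1 :\ z by rewrite in_setD1 cz /c; case: (a == z).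
  have c2' : c \in S2 :\ z by rewrite in_setD1 cz /c; case: (a == z).
  apply: (@hub _ c) => x; rewrite !inE => /andP[xz /orP[] xS].
    apply: (conn_mono (setSD _ (subsetUl S1 S2))); apply: z1 => //.
    by rewrite in_setD1 xz.
  apply: (conn_mono (setSD _ (subsetUr S1 S2))); apply: z2 => //.
  by rewrite in_setD1 xz.
Qed.

Lemma block_eq (B1 B2 : {set T}) a b : is_block e B1 -> is_block e B2 ->
  a \in B1 -> a \in B2 -> b \in B1 -> b \in B2 -> a != b -> B1 = B2.
Proof.
move=> [bb1 m1] [bb2 m2] a1 a2 b1 b2 ab.
have bU := bicU (proj1 (bicP _) bb1) (proj1 (bicP _) bb2) a1 a2 b1 b2 ab.
have E1 := m1 _ (subsetUl B1 B2) (proj2 (bicP _) bU).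
have E2 := m2 _ (subsetUr B1 B2) (proj2 (bicP _) bU).
by rewrite -E1 E2.
Qed.

Lemma path_last_conn (U : {set T}) a p : path e a p -> {subset a :: p <= U} ->
  forall x, x \in a :: p -> conn_in e U x (last a p).
Proof.
elim: p a => [|y p IH] a /=.
  by move=> _ _ x; rewrite inE => /eqP ->; apply: conn_refl.
move=> /andP[eay pth] sub x; rewrite inE => /orP[/eqP ->|xin].
  apply: (conn_trans (y := y)).
    by apply: conn_edge => //; apply: sub; rewrite !inE eqxx ?orbT.
  apply: IH => //; first by move=> z zin; apply: sub; rewrite inE zin orbT.
  by rewrite inE eqxx.
apply: IH => //; by move=> z zin; apply: sub; rewrite inE zin orbT.
Qed.

Lemma path_avoid (U : {set T}) z a p : path e a p -> uniq (a :: p) -> {subset a :: p <= U} ->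
  forall x, x \in a :: p -> x != z ->
  conn_in e (U :\ z) x a || conn_in e (U :\ z) x (last a p).
Proof.
elim: p a => [|y p IH] a /=.
  by move=> _ _ _ x; rewrite inE => /eqP -> _; rewrite conn_refl.
move=> /andP[eay pth] /andP[ani un] sub x; rewrite inE => /orP[/eqP ->|xin] xz.
  by rewrite conn_refl.
have sub' : {subset y :: p <= U} by move=> w win; apply: sub; rewrite inE win orbT.
case: (eqVneq a z) => [az|az].
  apply/orP; right; apply: (path_last_conn pth) => // w win.
  rewrite in_setD1 sub' // andbT; apply/eqP => wz; move: ani; by rewrite az -wz win.
have xU : x \in U :\ z by rewrite in_setD1 xz sub'.
case/orP: (IH y pth un sub' x xin xz) => [cxy|->]; last by rewrite orbT.
apply/orP; left; apply: (conn_trans cxy); apply: conn_edge.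
- exact: (conn_mem xU cxy).
- by rewrite in_setD1 az sub // inE eqxx.
- by rewrite esym.
Qed.

Lemma ear (S : {set T}) a p : bic S -> a \in S -> path e a p -> uniq (a :: p) ->
  last a p \in S -> a != last a p -> bic (S :|: [set x in a :: p]).
Proof.
move=> [S0 cS zS] aS pth un bS ab; set b := last a p in bS ab *.
set P := [set x in a :: p]; set U := S :|: P.
have subP : {subset a :: p <= U} by move=> x xin; rewrite inE inE xin orbT.
split.
- by apply/set0Pn; exists a; rewrite inE aS.
- apply: (@hub _ a) => x; rewrite inE => /orP[] xS.
    by apply: (conn_mono (subsetUl S P)); apply: cS.
  apply: (conn_trans (y := b)); first by apply: path_last_conn => //; move: xS; rewrite inE.
  by apply: (conn_mono (subsetUl S P)); apply: cS.
- move=> z; set c := if a == z then b else a.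
  have cz : c != z by rewrite /c; case: (eqVneq a z) => [<-|az] //; rewrite eq_sym.
  have cS' : c \in S :\ z by rewrite in_setD1 cz /c; case: (a == z).
  have sub : S :\ z \subset U :\ z by apply: setSD; apply: subsetUl.
  apply: (@hub _ c) => x xU; have := xU; rewrite !inE => /andP[xz /orP[] xS].
    by apply: (conn_mono sub); apply: zS => //; rewrite in_setD1 xz.
  have xin : x \in a :: p by move: xS; rewrite inE.
  have [t [ct tS]] : exists t, conn_in e (U :\ z) x t /\ t \in S.
    by case/orP: (path_avoid pth un subP xin xz) => ?; [exists a| exists b].
  apply: (conn_trans ct); apply: (conn_mono sub); apply: zS => //.
  by rewrite in_setD1 tS andbT; have := conn_mem xU ct; rewrite in_setD1 => /andP[].
Qed.

Lemma pair_edge v p x y : e v p -> x \in [set v; p] -> y \in [set v; p] -> x != y -> e x y.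
Proof.
move=> evp; rewrite !inE => /orP[]/eqP-> /orP[]/eqP->; rewrite ?eqxx //.
by rewrite esym.
Qed.

Lemma bic2 v p : e v p -> bic [set v; p].
Proof.
move=> evp; split.
- by apply/set0Pn; exists v; rewrite !inE eqxx.
- move=> x y xS yS; case: (eqVneq x y) => [->|xy]; first exact: conn_refl.
  by apply: conn_edge => //; apply: (pair_edge evp).
- move=> z x y xS yS; case: (eqVneq x y) => [->|xy]; first exact: conn_refl.
  apply: conn_edge => //; apply: (pair_edge evp) => //.
    by move: xS; rewrite in_setD1 => /andP[].
  by move: yS; rewrite in_setD1 => /andP[].
Qed.

Lemma bic1 r : bic [set r].
Proof.
split.
- by apply/set0Pn; exists r; rewrite inE.
- by move=> x y; rewrite !inE => /eqP-> /eqP->; apply: conn_refl.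
- by move=> z x y; rewrite !in_setD1 !inE => /andP[_ /eqP->] /andP[_ /eqP->]; apply: conn_refl.
Qed.


Lemma card_sum (S : {set T}) (P : pred T) : #|[set y in S | P y]| = \sum_(y in S) P y.
Proof.
rewrite -sum1_card big_mkcond [RHS]big_mkcond /=; apply: eq_bigr => y _.
by rewrite inE; case: (y \in S); case: (P y).
Qed.

Lemma sum_out (C : {set T}) (o : rel T) :
  (forall x y, o x y -> e x y) ->
  (forall x y, x \in C -> y \in C -> e x y -> (o x y && ~~ o y x) || (o y x && ~~ o x y)) ->
  (forall x, x \in C -> #|[set u in C | e x u]| = 2) ->
  \sum_(x in C) #|[set y in C | o x y]| = #|C|.
Proof.
move=> oe ox deg.
have E1 : \sum_(x in C) #|[set y in C | o x y]| = \sum_(x in C) #|[set y in C | o y x]|.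
  under eq_bigr do rewrite card_sum.
  under [RHS]eq_bigr do rewrite card_sum.
  exact: exchange_big.
have E2 : \sum_(x in C) (#|[set y in C | o x y]| + #|[set y in C | o y x]|) = (#|C|).*2.
  rewrite -sum1_card -addnn -big_split /=; apply: eq_bigr => x xC.
  rewrite !card_sum -big_split /=.
  have -> : 1 + 1 = #|[set u in C | e x u]| by rewrite deg.
  rewrite card_sum; apply: eq_bigr => y yC.
  case exy: (e x y).
    by case/orP: (ox x y xC yC exy) => /andP[-> /negbTE ->].
  have -> : o x y = false by apply/negP => /oe; rewrite exy.
  have -> : o y x = false by apply/negP => /oe; rewrite esym exy.
  by [].
move: E2; rewrite big_split /= -E1 addnn -!muln2; lia.
Qed.

Lemma all_one_ge (C : {set T}) (f : T -> nat) : \sum_(x in C) f x = #|C| ->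
  (forall x, x \in C -> 0 < f x) -> forall x, x \in C -> f x = 1.
Proof.
move=> S pos.
have E : \sum_(x in C) (f x - 1) = 0.
  have H : \sum_(x in C) (1 + (f x - 1)) = #|C|.
    by rewrite -S; apply: eq_bigr => x xC; have := pos x xC; lia.
  by move: H; rewrite big_split /= sum1_card; lia.
move=> x xC; move/eqP: E; rewrite sum_nat_eq0 => /forallP /(_ x); rewrite xC /=.
have := pos x xC; lia.
Qed.

Lemma all_one_le (C : {set T}) (f : T -> nat) : \sum_(x in C) f x = #|C| ->
  (forall x, x \in C -> f x <= 1) -> forall x, x \in C -> f x = 1.
Proof.
move=> S le.
have E : \sum_(x in C) (1 - f x) = 0.
  have H : \sum_(x in C) (f x + (1 - f x)) = #|C|.
    by rewrite -sum1_card; apply: eq_bigr => x xC; have := le x xC; lia.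
  by move: H; rewrite big_split /= S; lia.
move=> x xC; move/eqP: E; rewrite sum_nat_eq0 => /forallP /(_ x); rewrite xC /=.
have := le x xC; lia.
Qed.

Lemma nbr2 (C : {set T}) x y1 y2 b : #|[set u in C | e x u]| = 2 ->
  y1 \in C -> y2 \in C -> e x y1 -> e x y2 -> y1 != y2 -> b \in C -> e x b ->
  (b == y1) || (b == y2).
Proof.
move=> deg y1C y2C e1 e2 ne bC eb.
have sub : [set y1; y2] \subset [set u in C | e x u].
  by apply/subsetP => u; rewrite !inE => /orP[]/eqP->; rewrite ?y1C ?y2C.
have := subset_cardP _ sub; rewrite cards2 ne deg => /(_ erefl) => H.
by have := H b; rewrite !inE bC eb /= => ->.
Qed.

Lemma cyc3 (S : {set T}) : is_cycle_in e S -> #|S| <= 3 -> is_complete_in e S.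
Proof.
move=> [c3 _ deg] le x y xS yS xy.
have sub : [set u in S | e x u] \subset S :\ x.
  apply/subsetP => u; rewrite !inE => /andP[uS exu]; rewrite uS andbT.
  by apply: contraTneq exu => ->; rewrite eirr.
have cd : #|[set u in S | e x u]| = #|S :\ x|.
  apply/eqP; rewrite eqn_leq subset_leq_card // deg //.
  by have := cardsD1 x S; rewrite xS; lia.
have := subset_cardP cd sub => /(_ y) H.
have : y \in S :\ x by rewrite in_setD1 eq_sym xy yS.
by rewrite -H inE => /andP[].
Qed.

Lemma cyc_no_tri (C : {set T}) v u w : is_cycle_in e C -> 4 <= #|C| ->
  v \in C -> u \in C -> w \in C -> e v u -> e v w -> e u w -> False.
Proof.
move=> [_ [_ cC] deg] c4 vC uC wC evu evw euw.
have ne : forall a b, e a b -> a != b by move=> a b eab; apply: contraTneq eab => ->; rewrite eirr.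
set Q := [set v; u; w].
have cl : forall a b, a \in Q -> b \in C -> e a b -> b \in Q.
  move=> a b; rewrite !inE => /orP[/orP[]|] /eqP -> bC eab.
  - by case/orP: (nbr2 (deg _ vC) uC wC evu evw (ne _ _ euw) bC eab) => ->; rewrite ?orbT.
  - by case/orP: (nbr2 (deg _ uC) vC wC (etrans (esym u v) evu) euw (ne _ _ evw) bC eab) => ->; rewrite ?orbT.
  - by case/orP: (nbr2 (deg _ wC) vC uC (etrans (esym w v) evw) (etrans (esym w u) euw) (ne _ _ evu) bC eab) => ->; rewrite ?orbT.
have : ~~ (C \subset Q).
  apply/negP => /subset_leq_card; rewrite /Q -setUA cardsU1 cards2; lia.
case/subsetPn => z zC zQ.
have vQ : v \in Q by rewrite !inE eqxx.
by have := conn_closed cl vQ (cC v z vC zC); rewrite (negbTE zQ).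
Qed.


Fixpoint reach (S B : {set T}) k x : bool :=
  (x \in B) || (if k is k'.+1 then [exists y, [&& y \in S, e x y & reach S B k' y]] else false).

Lemma dist_exists (S B : {set T}) :
  (forall x, x \in S -> exists2 b, b \in B & conn_in e S x b) ->
  exists d : T -> nat, [/\ forall x, x \in S -> (d x == 0) = (x \in B),
   forall x y, x \in S -> y \in S -> e x y -> d x <= (d y).+1 &
   forall x, x \in S -> x \notin B -> exists y, [/\ y \in S, e x y & (d y).+1 = d x]].
Proof.
move=> H.
have reach_path : forall x p, path (rin S) x p -> last x p \in B -> reach S B (size p) x.
  move=> x p; elim: p x => [|y p IH] x /=; first by move=> _ ->.
  move=> /andP[/and3P[_ yS exy] pth] lB; apply/orP; right; apply/existsP; exists y.
  by rewrite yS exy IH.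
have ex : forall x, exists k, (x \notin S) || reach S B k x.
  move=> x; case: (boolP (x \in S)) => xS; last by exists 0.
  have [b bB cb] := H x xS; move: cb; rewrite connE => /connectP[p pth lp].
  by exists (size p); apply: reach_path pth _; rewrite -lp.
pose d x := ex_minn (ex x).
have dP : forall x, (x \notin S) || reach S B (d x) x by move=> x; rewrite /d; case: ex_minnP.
have dmin : forall x k, (x \notin S) || reach S B k x -> d x <= k.
  by move=> x k; rewrite /d; case: ex_minnP => m _ mm /mm.
have D2 : forall x y, x \in S -> y \in S -> e x y -> d x <= (d y).+1.
  move=> x y xS yS exy; apply: dmin; apply/orP; right => /=; apply/orP; right.
  apply/existsP; exists y; rewrite yS exy /=; by have := dP y; rewrite yS.
exists d; split => //.
- move=> x xS; apply/idP/idP.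
    by move=> /eqP d0; have := dP x; rewrite xS d0 /= orbF.
  by move=> xB; have := dmin x 0; rewrite /= xB orbT => /(_ erefl); case: (d x).
- move=> x xS xB; have := dP x; rewrite xS /=.
  case E: (d x) => [|k] /=; first by rewrite (negbTE xB).
  rewrite (negbTE xB) /= => /existsP[y /and3P[yS exy ry]].
  exists y; split => //; have := dmin y k; rewrite ry orbT => /(_ erefl) le.
  have := D2 x y xS yS exy; rewrite E; lia.
Qed.


Lemma F2 (o : rel T) (C : {set T}) : one_perfect e o -> long_cycle_block e C ->
  forall v, v \in C -> #|[set y in C | o v y]| = 1.
Proof.
move=> [[oe ox] op] [bC [c3 cC deg] c4].
apply: (all_one_le (f := fun v => #|[set y in C | o v y]|)).
  by apply: sum_out => // x y _ _; apply: ox.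
move=> v vC; rewrite leqNgt; apply/negP => /card_gt1P [u [w [uin win uw]]].
move: uin win; rewrite !inE => /andP[uC ovu] /andP[wC ovw].
exact: (cyc_no_tri (And3 c3 cC deg) c4 vC uC wC (oe _ _ ovu) (oe _ _ ovw) (op _ _ _ ovu ovw uw)).
Qed.

Lemma F3 (o : rel T) (C : {set T}) : one_perfect e o -> long_cycle_block e C ->
  forall v w, v \in C -> o v w -> w \in C.
Proof.
move=> opf lC v w vC ovw.
have := F2 opf lC vC => c1.
have : 0 < #|[set y in C | o v y]| by rewrite c1.
case/card_gt0P => u; rewrite inE => /andP[uC ovu].
case: (boolP (w \in C)) => // wC.
move: opf lC => [[oe ox] op] [[bb bmax] cyc c4].
have uw : u != w by apply: contraNneq wC => <-.
have euw := op _ _ _ ovu ovw uw.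
have evu := oe _ _ ovu; have evw := oe _ _ ovw.
have vu : v != u by apply: contraTneq evu => ->; rewrite eirr.
have vw : v != w by apply: contraNneq wC => <-.
have := @ear C v [:: w; u] (proj1 (bicP _) bb) vC.
rewrite /= evw (esym w u) euw /= !inE negb_or vw vu (eq_sym w u) uw uC => /(_ erefl erefl erefl erefl) bU.
have E := bmax _ (subsetUl _ _) (proj2 (bicP _) bU).
by move: wC; rewrite -E !inE eqxx !orbT.
Qed.

Lemma forward : graph_connected e -> one_perfectly_orientable e -> at_most_one_long_cycle_block e.
Proof.
move=> [_ gc] [o opf] C1 C2 l1 l2.
have opf' := opf; move: opf' => [[oe ox] op].
have ne0 : forall C, long_cycle_block e C -> exists b0, b0 \in C.
  by move=> C [_ _ c4]; apply/card_gt0P; lia.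
have [b1 b1C] := ne0 _ l1.
have [d [D0 D2 D1]] : exists d : T -> nat, [/\ forall x, x \in [set: T] -> (d x == 0) = (x \in C1),
   forall x y, x \in [set: T] -> y \in [set: T] -> e x y -> d x <= (d y).+1 &
   forall x, x \in [set: T] -> x \notin C1 -> exists y, [/\ y \in [set: T], e x y & (d y).+1 = d x]].
  by apply: dist_exists => x _; exists b1 => //; apply: gc; rewrite inE.
have up : forall n x y, d x = n -> o x y -> d y = (d x).+1 -> False.
  elim=> [|n IH] x y dx oxy dy.
    have xC : x \in C1 by rewrite -D0 ?inE // dx.
    by have := F3 opf l1 xC oxy; rewrite -D0 ?inE // dy dx.
  have xC : x \notin C1 by rewrite -D0 ?inE // dx.
  have [q [_ exq dq]] := D1 x (in_setT x) xC.
  case/orP: (ox _ _ exq) => /andP[oq _].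
    have qy : q != y by apply/eqP => qy; move: dy dq; rewrite qy; lia.
    have := D2 y q (in_setT _) (in_setT _) (etrans (esym y q) (op _ _ _ oq oxy qy)); lia.
  by apply: (IH q x) => //; lia.
have [b0 b0C] := ne0 _ l2.
case: (arg_minnP d b0C) => b bC2 bmin.
case E: (d b) => [|k].
  have bC1 : b \in C1 by rewrite -D0 ?inE // E.
  have c1 : 0 < #|[set y in C1 | o b y]| by rewrite (F2 opf l1 bC1).
  case/card_gt0P: c1 => u; rewrite inE => /andP[uC1 obu].
  have uC2 := F3 opf l2 bC2 obu.
  have bu : b != u by apply: contraTneq (oe _ _ obu) => ->; rewrite eirr.
  by case: l1 => [bl1 _ _]; case: l2 => [bl2 _ _]; apply: (block_eq bl1 bl2 bC1 bC2 uC1 uC2 bu).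
have bC1 : b \notin C1 by rewrite -D0 ?inE // E.
have [p [_ ebp dp]] := D1 b (in_setT b) bC1.
case/orP: (ox _ _ ebp) => /andP[obp _].
  exfalso; have := bmin p (F3 opf l2 bC2 obp); lia.
by case: (up (d p) p b erefl obp (sym_equal dp)).
Qed.


Definition lexf (f : T -> nat) (y x : T) : bool :=
  (f y < f x) || ((f y == f x) && (enum_rank y < enum_rank x)).

Lemma lex_xor f x y : x != y -> (lexf f y x && ~~ lexf f x y) || (lexf f x y && ~~ lexf f y x).
Proof.
move=> xy; rewrite /lexf.
have ne : (enum_rank x : nat) != enum_rank y.
  by apply: contra xy => /eqP /val_inj /enum_rank_inj ->.
case: (ltngtP (f y) (f x)) => H /=; rewrite ?andbF ?orbF //=.
move: ne; rewrite eq_sym; case: (ltngtP (enum_rank y : nat) (enum_rank x)) => //.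
Qed.

Lemma cyc_orient (C : {set T}) : is_block e C -> is_cycle_in e C ->
  exists oC : rel T,
   (forall x y, x \in C -> y \in C -> e x y -> (oC x y && ~~ oC y x) || (oC y x && ~~ oC x y)) /\
   (forall v u w, v \in C -> u \in C -> w \in C -> oC v u -> oC v w -> u = w).
Proof.
move=> [bb _] [c3 [C0 cC] deg].
have [_ _ zC] := proj1 (bicP C) bb.
case/set0Pn: C0 => c0 c0C.
have : 1 < #|[set u in C | e c0 u]| by rewrite deg.
case/card_gt1P => c1 [c2 []]; rewrite !inE => /andP[c1C e01] /andP[c2C e02] c12.
have c10 : c1 != c0 by apply: contraTneq e01 => ->; rewrite eirr.
have c20 : c2 != c0 by apply: contraTneq e02 => ->; rewrite eirr.
have c1S : c1 \in C :\ c0 by rewrite in_setD1 c10 c1C.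
have [rho [_ _ D1]] := @dist_exists (C :\ c0) [set c1]
   (fun x xS => ex_intro2 _ _ c1 (set11 c1) (zC c0 x c1 xS c1S)).
pose oC x y := e x y && (if x == c0 then y == c2 else if y == c0 then x == c1 else lexf rho y x).
have oxor : forall x y, x \in C -> y \in C -> e x y -> (oC x y && ~~ oC y x) || (oC y x && ~~ oC x y).
  move=> x y xC yC exy; rewrite /oC exy (esym y x) exy /=.
  have xy : x != y by apply: contraTneq exy => ->; rewrite eirr.
  case: (eqVneq x c0) => [xc|xc].
    have yc : y != c0 by rewrite -xc eq_sym.
    rewrite (negbTE yc) /=.
    have := nbr2 (deg _ c0C) c1C c2C e01 e02 c12 yC; rewrite -xc => /(_ exy).
    case/orP => /eqP ->; rewrite ?eqxx ?(negbTE c12) //.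
    by rewrite eq_sym (negbTE c12).
  case: (eqVneq y c0) => [yc|yc] /=.
    have := nbr2 (deg _ c0C) c1C c2C e01 e02 c12 xC; rewrite -yc esym => /(_ exy).
    case/orP => /eqP ->; rewrite ?eqxx ?(negbTE c12) //.
    by rewrite eq_sym (negbTE c12).
  exact: lex_xor.
have pos : forall x, x \in C -> 0 < #|[set y in C | oC x y]|.
  move=> x xC; apply/card_gt0P.
  case: (eqVneq x c0) => [->|xc].
    by exists c2; rewrite inE c2C /oC e02 !eqxx.
  case: (eqVneq x c1) => [->|xc1].
    by exists c0; rewrite inE c0C /oC esym e01 (negbTE c10) !eqxx.
  have xS : x \in C :\ c0 by rewrite in_setD1 xc xC.
  have xc1' : x \notin [set c1] by rewrite inE.
  have [y [yS exy dy]] := D1 x xS xc1'.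
  move: yS; rewrite in_setD1 => /andP[yc yC].
  exists y; rewrite inE yC /oC exy (negbTE xc) (negbTE yc) /lexf -dy leqnn //.
have oe : forall x y, oC x y -> e x y by move=> x y /andP[].
have one := all_one_ge (sum_out oe oxor deg) pos.
exists oC; split => // v u w vC uC wC ou ow.
have : #|[set y in C | oC v y]| <= 1 by rewrite one.
move/card_le1P => H.
have uin : u \in [set y in C | oC v y] by rewrite inE uC ou.
have win : w \in [set y in C | oC v y] by rewrite inE wC ow.
by have := H u uin w; rewrite win inE => /(@sym_equal _ _ _) /eqP.
Qed.


Lemma base : graph_connected e -> at_most_one_long_cycle_block e ->
  exists (B0 : {set T}) (oB : rel T), [/\ B0 != set0, {in B0 &, forall x y, conn_in e B0 x y},
   (forall x y, x \in B0 -> y \in B0 -> e x y -> (oB x y && ~~ oB y x) || (oB y x && ~~ oB x y)),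
   (forall v u w, v \in B0 -> u \in B0 -> w \in B0 -> oB v u -> oB v w -> u = w) &
   (forall B, long_cycle_block e B -> B = B0)].
Proof.
move=> [ne _] amo.
case: (classic (exists C, long_cycle_block e C)) => [[C lC]|nC].
  have lC' := lC; case: lC' => [bC cyc c4].
  have [oC [ox ou]] := cyc_orient bC cyc.
  case: cyc => [_ [C0 cC] _].
  exists C, oC; split => // B lB; exact: amo.
case/set0Pn: ne => r _.
have [_ c1 _] := bic1 r.
exists [set r], (fun _ _ => false); split => //.
- by apply/set0Pn; exists r; rewrite inE.
- by move=> x y; rewrite !inE => /eqP-> /eqP->; rewrite eirr.
- by move=> B lB; case: nC; exists B.
Qed.

Lemma backward : graph_connected e -> block_cactus e -> at_most_one_long_cycle_block e ->
  one_perfectly_orientable e.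
Proof.
move=> gC cact amo.
have [B0 [oB [ne cB xB uB lB]]] := base gC amo.
have [_ gc] := gC.
have /set0Pn [b0 b0B] := ne.
have [d [_ _ D1]] := @dist_exists [set: T] B0
   (fun x _ => ex_intro2 _ _ b0 b0B (gc x b0 (in_setT x) (in_setT b0))).
have descent : forall x, exists2 b, b \in B0 & conn_in e (x |: [set z | d z < d x]) x b.
  suff H : forall n x, d x < n -> exists2 b, b \in B0 & conn_in e (x |: [set z | d z < d x]) x b.
    by move=> x; apply: (H (d x).+1).
  elim=> [//|n IH] x lt.
  case: (boolP (x \in B0)) => xB0; first by exists x => //; apply: conn_refl.
  have [y [_ exy dy]] := D1 x (in_setT x) xB0.
  have ly : d y < n by rewrite -ltnS dy.
  have [b bB cy] := IH y ly.
  exists b => //; apply: (@conn_trans _ x y).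
    by apply: conn_edge => //; rewrite !inE ?eqxx // -dy ltnSn orbT.
  apply: (conn_mono _ cy); apply/subsetP => z; rewrite !inE => /orP[/eqP->|lz].
    by rewrite -dy ltnSn orbT.
  by rewrite -dy (ltn_trans lz (ltnSn _)) orbT.
pose o x y := e x y && (if x \in B0 then (y \in B0) && oB x y else (y \in B0) || lexf d y x).
exists o; split; [split|].
- by move=> x y /andP[].
- move=> x y exy; rewrite /o exy (esym y x) exy /=.
  have xy : x != y by apply: contraTneq exy => ->; rewrite eirr.
  case: (boolP (x \in B0)) => xB0; case: (boolP (y \in B0)) => yB0 //=.
    exact: xB.
  exact: lex_xor.
move=> v u w /andP[evu]; rewrite /o; case: ifP => vB0.
  move=> /andP[uB0 ou] /andP[evw /andP[wB0 ow]] uw.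
  by move: uw; rewrite (uB v u w vB0 uB0 wB0 ou ow) eqxx.
move=> hu /andP[evw hw] uw.
have vB0' : v \notin B0 by rewrite vB0.
have [p [_ evp dp]] := D1 v (in_setT v) vB0'.
have [B [bB sB]] := bic_block (bic2 evp).
have vB : v \in B by apply: (subsetP sB); rewrite !inE eqxx.
have pB : p \in B by apply: (subsetP sB); rewrite !inE eqxx orbT.
have inB : forall u, e v u -> (u \in B0) || lexf d u v -> u \in B.
  move=> x evx hx; case: (eqVneq x p) => [->//|xp].
  set W := [set: T] :\ v.
  have vx : v != x by apply: contraTneq evx => ->; rewrite eirr.
  have vp : v != p by apply: contraTneq evp => ->; rewrite eirr.
  have subW : forall y, y != v -> d y <= d v -> y |: [set z | d z < d y] \subset W.
    move=> y yv le; apply/subsetP => z; rewrite !inE => /orP[/eqP->|lz].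
      by rewrite yv.
    by rewrite andbT; apply/eqP => zv; move: lz; rewrite zv ltnNge le.
  have B0W : B0 \subset W.
    by apply/subsetP => z zB; rewrite in_setD1 in_setT andbT; apply: contraTneq zB => ->.
  have [bx bxB cx] : exists2 b, b \in B0 & conn_in e W x b.
    case: (boolP (x \in B0)) => xB0; first by exists x => //; apply: conn_refl.
    have [b bB0' cb] := descent x; exists b => //; apply: (conn_mono _ cb); apply: subW.
      by rewrite eq_sym.
    by move: hx; rewrite (negbTE xB0) /= /lexf => /orP[/ltnW //|/andP[/eqP-> _]].
  have [bp bpB cp] := descent p.
  have cp' : conn_in e W p bp.
    by apply: (conn_mono _ cp); apply: subW; [rewrite eq_sym | rewrite -dp leqnSn].
  have cxp : conn_in e W x p.
    apply: (conn_trans cx); apply: (conn_trans (conn_mono B0W (cB _ _ bxB bpB))).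
    by rewrite conn_sym.
  have xW : x \in W by rewrite in_setD1 in_setT andbT eq_sym.
  move: cxp; rewrite connE => /connectP[q pth lq].
  move: lq; case: (shortenP pth) => q' pth' un' _ lq'.
  have subq := path_rin_in pth' xW.
  have vq : v \notin x :: q'.
    by apply/negP => /subq; rewrite in_setD1 eqxx.
  have vS2 : v \in [set v; p] by rewrite !inE eqxx.
  have := @ear [set v; p] v (x :: q') (bic2 evp) vS2.
  have un2 : (x \notin q') && uniq q' by exact: un'.
  rewrite /= evx (path_rin_e pth') /= vq un2 -lq' !inE eqxx orbT vp.
  move=> /(_ erefl erefl erefl erefl) bU.
  have [B' [bB' sB']] := bic_block bU.
  have vB' : v \in B' by apply: (subsetP sB'); rewrite !inE eqxx.
  have pB' : p \in B' by apply: (subsetP sB'); rewrite !inE eqxx orbT.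
  have xB' : x \in B' by apply: (subsetP sB'); rewrite !inE eqxx !orbT.
  by rewrite (block_eq bB bB' vB vB' pB pB' vp).
have uB' := inB u evu hu.
have wB' := inB w evw hw.
case: (cact B bB) => [cyc|comp]; last exact: comp.
case: (ltnP 3 #|B|) => c4.
  have := lB B (And3 bB cyc c4) => EB.
  by move: vB0; rewrite -EB vB.
exact: (cyc3 cyc c4).
Qed.

End Aux.

Theorem corollary3p3 (T : finType) (e : rel T) :
  symmetric e -> irreflexive e ->
  graph_connected e -> block_cactus e ->
  (one_perfectly_orientable e <-> at_most_one_long_cycle_block e).
Proof.
move=> es ei gc bc; split.
  exact: (forward es ei gc).
exact: (backward es ei gc bc).
Qed.
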